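(* Let $G(x)=\dfrac{1}{4\sqrt{2e^{-x}-1}}$ for real $x<\ln2$. Then: (1) $G$ is logarithmically absolutely monotonic on $(-\infty,\ln 2)$. (2) The sequences \[ (-1)^n\sum_{k=0}^{n}(-1)^kS(n,k)(2k-1)!!,\quad n\in\{0,1,2,\dots\}, \] and \[ (-1)^n\sum_{k=1}^{n}(-1)^kS(n,k)(2k-2)!!,\quad n\in\{1,2,\dots\}, \] are positive, increasing, and logarithmically convex.
   Context: A positive infinitely differentiable function $f$ on an interval $I$ is logarithmically absolutely monotonic if $[\ln f(x)]^{(n)}\ge0$ for all $n\in\mathbb{N}$ and $x\in I$. $S(n,k)$ are the Stirling numbers of the second kind, given by $\frac{(e^x-1)^k}{k!}=\sum_{n\ge k}S(n,k)\frac{x^n}{n!}$. Double factorials: $(2k-1)!!=1\cdot3\cdots(2k-1)$ for $k\ge1$, $(-1)!!=1$, and $(2j)!!=2^jj!$ with $0!!=1$. A sequence $(s_n)$ of positive numbers is logarithmically convex if $s_n^2\le s_{n-1}s_{n+1}$ for all $n$ at which both neighbours are defined. *)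

(* Defs.v *)
From Stdlib Require Import Reals Factorial.
From Coquelicot Require Import Coquelicot.
Open Scope R_scope.

(* Stirling numbers of the second kind, via the standard recurrence
   S(0,0)=1, S(0,k+1)=0, S(n+1,0)=0, S(n+1,k+1)=(k+1)S(n,k+1)+S(n,k);
   this is equivalent to the generating function (e^x-1)^k/k! = sum S(n,k) x^n/n!. *)
Fixpoint stirling2 (n k : nat) : nat :=
  match n, k with
  | O, O => 1%nat
  | O, S _ => 0%nat
  | S _, O => 0%nat
  | S n', S k' => (S k' * stirling2 n' (S k') + stirling2 n' k')%nat
  end.

(* (2k-1)!! = 1*3*...*(2k-1), with (-1)!! = 1 *)
Fixpoint odd_dfact (k : nat) : nat :=
  match k with
  | O => 1%nat
  | S k' => ((2 * k' + 1) * odd_dfact k')%nat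
  end.

(* (2j)!! = 2^j j!, with 0!! = 1 *)
Definition even_dfact (j : nat) : nat := (2 ^ j * fact j)%nat.

Definition log_abs_monotonic (f : R -> R) (I : R -> Prop) : Prop :=
  (forall x, I x -> 0 < f x) /\
  (forall (n : nat) x, I x -> ex_derive_n f n x) /\
  (forall (n : nat) x, I x -> (1 <= n)%nat ->
      0 <= Derive_n (fun y => ln (f y)) n x).

Definition G (x : R) : R := 1 / (4 * sqrt (2 * exp (- x) - 1)).

Definition seqA (n : nat) : R :=
  (-1) ^ n * sum_n_m (fun k => (-1) ^ k * INR (stirling2 n k) * INR (odd_dfact k)) 0 n.

Definition seqB (n : nat) : R :=
  (-1) ^ n * sum_n_m (fun k => (-1) ^ k * INR (stirling2 n k) * INR (even_dfact (k - 1))) 1 n.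

(* Main.v *)
Require Import Defs.
From Stdlib Require Import Reals Lra Lia Factorial List.
From Coquelicot Require Import Coquelicot.
Import ListNotations.
Open Scope R_scope.

Lemma stir_n0 n : stirling2 (S n) 0 = 0%nat.
Proof. reflexivity. Qed.

Lemma stir_big n k : (n < k)%nat -> stirling2 n k = 0%nat.
Proof.
  revert k; induction n as [|n IH]; intros k Hk.
  - destruct k; [lia|reflexivity].
  - destruct k; [lia|]. simpl. rewrite !IH by lia. lia.
Qed.

Lemma stir_rec n k : INR (stirling2 (S n) (S k)) =
  INR (S k) * INR (stirling2 n (S k)) + INR (stirling2 n k).
Proof. change (stirling2 (S n) (S k)) with (S k * stirling2 n (S k) + stirling2 n k)%nat.
  rewrite plus_INR, mult_INR. reflexivity. Qed.

Lemma stir_sum n (g : nat -> R) :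
  sum_f_R0 (fun k => (-1)^k * INR (stirling2 (S n) k) * g k) (S n) =
  sum_f_R0 (fun k => (-1)^k * INR (stirling2 n k) * (INR k * g k - g (S k))) n.
Proof.
  rewrite decomp_sum by lia. simpl Init.Nat.pred.
  rewrite stir_n0. simpl INR at 1.
  set (p := fun k => (-1)^k * INR k * INR (stirling2 n k) * g k).
  transitivity (sum_f_R0 (fun k => p (S k)) n +
                sum_f_R0 (fun k => - ((-1)^k * INR (stirling2 n k) * g (S k))) n).
  - rewrite <- sum_plus. ring_simplify. apply sum_eq. intros i _.
    rewrite stir_rec. unfold p. simpl pow. ring.
  - assert (Hp : sum_f_R0 (fun k => p (S k)) n = sum_f_R0 p n).
    { assert (H := decomp_sum p (S n)). simpl Init.Nat.pred in H.
      rewrite tech5 in H. 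
      assert (p (S n) = 0) by (unfold p; rewrite stir_big by lia; simpl; ring).
      assert (p 0%nat = 0) by (unfold p; simpl; ring).
      specialize (H ltac:(lia)). lra. }
    rewrite Hp, <- sum_plus. apply sum_eq. intros i _. unfold p. ring.
Qed.

Fixpoint rise (k : nat) (y : R) : R :=
  match k with O => 1 | S k' => rise k' y * (y + INR k') end.

Lemma expand n y : y ^ n =
  (-1)^n * sum_f_R0 (fun k => (-1)^k * INR (stirling2 n k) * rise k y) n.
Proof.
  induction n as [|n IH].
  - simpl. ring.
  - rewrite stir_sum. simpl pow at 1. rewrite IH.
    match goal with |- _ = _ * sum_f_R0 ?F n => 
      assert (E : sum_f_R0 F n = - y * sum_f_R0 (fun k => (-1)^k * INR (stirling2 n k) * rise k y) n)
      by (rewrite scal_sum; apply sum_eq; intros i _; simpl rise; ring) end.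
    rewrite E. simpl pow. ring.
Qed.

Lemma sum_n_m_R f n : sum_n_m f 0 n = sum_f_R0 f n.
Proof. apply (sum_n_Reals f n). Qed.

Lemma seqA_eq n : seqA n =
  (-1)^n * sum_f_R0 (fun k => (-1)^k * INR (stirling2 n k) * INR (odd_dfact k)) n.
Proof. unfold seqA. rewrite sum_n_m_R. reflexivity. Qed.

Definition Fb (k : nat) : R := match k with O => 1 | S k' => 2^k' * INR (fact (S k')) end.

Lemma seqB_eq j : seqB (S j) =
  (-1)^j * sum_f_R0 (fun k => (-1)^k * INR (stirling2 j k) * Fb k) j.
Proof.
  unfold seqB.
  set (f := fun k => (-1) ^ k * INR (stirling2 (S j) k) * INR (even_dfact (k - 1))).
  assert (H : sum_n_m f 0 (S j) = plus (sum_n_m f 0 0) (sum_n_m f 1 (S j))).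
  { apply sum_n_m_Chasles; lia. }
  rewrite sum_n_n in H. 
  assert (H0 : f 0%nat = 0) by (unfold f; rewrite stir_n0; simpl; ring).
  change (plus (f 0%nat) (sum_n_m f 1 (S j))) with (f 0%nat + sum_n_m f 1 (S j)) in H.
  rewrite H0, Rplus_0_l in H. rewrite <- H, sum_n_m_R. unfold f.
  rewrite stir_sum.
  match goal with |- _ * sum_f_R0 ?F j = _ => 
      assert (E : sum_f_R0 F j = -1 * sum_f_R0 (fun k => (-1)^k * INR (stirling2 j k) * Fb k) j) end.
  2:{ rewrite E. simpl pow. ring. }
  rewrite scal_sum. apply sum_eq. intros i _.
  unfold even_dfact. rewrite !mult_INR, !pow_INR.
  destruct i as [|i].
  - simpl. ring.
  - replace (S i - 1)%nat with i by lia. replace (S (S i) - 1)%nat with (S i) by lia.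
    simpl Fb. rewrite (fact_simpl i), !mult_INR. rewrite S_INR. simpl pow. rewrite ?plus_INR, ?mult_INR. replace (1+1) with 2 by ring. ring.
Qed.

Lemma isR_plus (a b : nat -> R) (la lb : R) : is_series a la -> is_series b lb ->
  is_series (fun n => a n + b n) (la + lb).
Proof. intros H1 H2. exact (is_series_plus a b la lb H1 H2). Qed.

Lemma isR_scal (c : R) (a : nat -> R) (la : R) : is_series a la -> is_series (fun n => c * a n) (c * la).
Proof. intros H. exact (is_series_scal_l c a la H). Qed.

Lemma isR_minus (a b : nat -> R) (la lb : R) : is_series a la -> is_series b lb ->
  is_series (fun n => a n - b n) (la - lb).
Proof. intros H1 H2. exact (is_series_minus a b la lb H1 H2). Qed.

Lemma isR_ext (a b : nat -> R) (l : R) : (forall n, a n = b n) -> is_series a l -> is_series b l.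
Proof. apply is_series_ext. Qed.

Lemma isR_nonneg (a : nat -> R) (l : R) : is_series a l -> (forall n, 0 <= a n) -> 0 <= l.
Proof.
  intros H Hp.
  assert (H0 : is_series (fun _ : nat => 0) 0).
  { apply isR_ext with (fun n => 0 * a n). intros; ring.
    assert (H1 := isR_scal 0 a l H). rewrite Rmult_0_l in H1. exact H1. }
  rewrite <- (is_series_unique _ _ H), <- (is_series_unique _ _ H0).
  apply Series_le. intros n; split; [lra|apply Hp]. exists l; exact H.
Qed.

Lemma isR_le (a b : nat -> R) (la lb : R) : is_series a la -> is_series b lb ->
  (forall n, a n <= b n) -> la <= lb.
Proof.
  intros H1 H2 Hle. assert (0 <= lb - la); [|lra].
  apply (isR_nonneg (fun n => b n - a n)). apply isR_minus; auto.
  intros n; specialize (Hle n); lra.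
Qed.

Lemma isR_shift (a : nat -> R) (l : R) : is_series a l -> is_series (fun n => a (S n)) (l - a 0%nat).
Proof.
  intros H. apply is_series_incr_1.
  replace l with (l - a 0%nat + a 0%nat) in H by ring. exact H.
Qed.

Lemma isR_pos0 (a : nat -> R) (l : R) : is_series a l -> (forall n, 0 <= a n) -> 0 < a 0%nat -> 0 < l.
Proof.
  intros H Hp H0. assert (0 <= l - a 0%nat); [|lra].
  apply (isR_nonneg _ _ (isR_shift _ _ H)). intros; apply Hp.
Qed.

Lemma isR_sum (f : nat -> nat -> R) (L : nat -> R) N :
  (forall k, (k <= N)%nat -> is_series (f k) (L k)) ->
  is_series (fun m => sum_f_R0 (fun k => f k m) N) (sum_f_R0 L N).
Proof.
  induction N as [|N IH]; intros H.
  - simpl. apply H; lia.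
  - simpl. apply isR_plus. apply IH; intros; apply H; lia. apply H; lia.
Qed.

Lemma CS_term lam u t v : 0 < lam -> 0 <= u -> 0 <= t -> 0 <= v -> t^2 = u * v ->
  2 * t <= lam * u + v / lam.
Proof.
  intros Hl Hu Ht Hv E.
  destruct (Req_dec u 0) as [Hu0|Hu0].
  - subst u. assert (t = 0) by nra. subst t.
    assert (0 <= v / lam) by (apply Rdiv_le_0_compat; lra). lra.
  - assert (Hup : 0 < u) by lra.
    assert (0 <= lam * (lam * u + v / lam - 2 * t)).
    { assert (Ev : v = t^2 / u) by (rewrite E; field; lra). rewrite Ev.
      replace (lam * (lam * u + t^2/u / lam - 2 * t)) with ((lam*u - t)^2 / u) by (field; lra).
      apply Rdiv_le_0_compat; [apply pow2_ge_0|lra]. }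
    nra.
Qed.

Lemma series_CS (u t v : nat -> R) (U T V : R) : is_series u U -> is_series t T -> is_series v V ->
  (forall m, 0 <= u m) -> (forall m, 0 <= t m) -> (forall m, 0 <= v m) ->
  (forall m, t m ^ 2 = u m * v m) -> T^2 <= U * V.
Proof.
  intros HU HT HV Pu Pt Pv E.
  assert (T0 : 0 <= T) by (apply (isR_nonneg t); auto).
  assert (U0 : 0 <= U) by (apply (isR_nonneg u); auto).
  assert (V0 : 0 <= V) by (apply (isR_nonneg v); auto).
  assert (key : forall lam, 0 < lam -> 2 * T <= lam * U + V / lam).
  { intros lam Hl.
    apply (isR_le (fun m => 2 * t m) (fun m => lam * u m + / lam * v m)).
    - apply isR_scal; auto.
    - replace (lam * U + V / lam) with (lam * U + / lam * V) by (unfold Rdiv; ring).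
      apply isR_plus; apply isR_scal; auto.
    - intros m. replace (/ lam * v m) with (v m / lam) by (unfold Rdiv; ring).
      apply CS_term; auto. }
  destruct (Req_dec T 0) as [HT0|HT0]. { subst T. nra. }
  assert (Tp : 0 < T) by lra.
  destruct (Req_dec U 0) as [HU0|HU0].
  - exfalso. subst U. specialize (key ((V + 1) / T)).
    assert (0 < (V+1)/T) by (apply Rdiv_lt_0_compat; lra).
    specialize (key H).
    replace (V / ((V + 1) / T)) with (T * (V / (V+1))) in key by (field; lra).
    assert (V / (V+1) < 1) by (apply Rmult_lt_reg_r with (V+1); [lra|]; field_simplify; lra).
    nra.
  - assert (Up : 0 < U) by lra. specialize (key (T / U)).
    assert (0 < T / U) by (apply Rdiv_lt_0_compat; lra). specialize (key H).
    replace (T / U * U) with T in key by (field; lra).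
    replace (V / (T / U)) with (U * V / T) in key by (field; lra).
    assert (T <= U * V / T) by lra.
    apply Rmult_le_compat_l with (r := T) in H0; [|lra].
    replace (T * (U * V / T)) with (U * V) in H0 by (field; lra). nra.
Qed.

Lemma lim_pow (u : nat -> R) (l : R) K : is_lim_seq u l -> is_lim_seq (fun n => u n ^ K) (l ^ K).
Proof.
  intros H. induction K as [|K IH].
  - simpl. apply is_lim_seq_const.
  - simpl. apply (is_lim_seq_mult' u (fun n => u n ^ K)); auto.
Qed.

Lemma geom_poly K : ex_series (fun m => (INR m + 1)^K * (/2)^m).
Proof.
  apply ex_series_Rabs.
  apply (ex_series_DAlembert _ (1 ^ K * / 2)).
  - rewrite pow1. lra.
  - intros n. apply Rmult_integral_contrapositive. split; apply pow_nonzero.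
    pose proof (pos_INR n); lra. lra.
  - apply is_lim_seq_ext with (fun m => (1 + / (INR m + 1))^K * / 2).
    + intros m. rewrite S_INR. pose proof (pos_INR m) as Hm.
      rewrite Rabs_pos_eq.
      * replace (INR m + 1 + 1) with ((1 + / (INR m + 1)) * (INR m + 1)) by (field; lra).
        rewrite Rpow_mult_distr. change ((/2)^(S m)) with (/2 * (/2)^m). field.
        split; apply pow_nonzero; lra.
      * apply Rdiv_le_0_compat. apply Rmult_le_pos; apply pow_le; lra.
        apply Rmult_lt_0_compat; apply pow_lt; lra.
    + apply (is_lim_seq_mult' _ (fun _ => /2)); [|apply is_lim_seq_const].
      apply lim_pow.
      assert (H : is_lim_seq (fun m => INR m + 1) p_infty).
      { apply is_lim_seq_ext with (fun m => INR (S m)). intros; apply S_INR.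
        apply (is_lim_seq_incr_1 INR). apply is_lim_seq_INR. }
      assert (H1 := is_lim_seq_inv _ _ H). specialize (H1 ltac:(discriminate)).
      assert (H2 := is_lim_seq_plus' (fun _ => 1) _ 1 0 (is_lim_seq_const 1) H1).
      rewrite Rplus_0_r in H2. exact H2.
Qed.

Lemma ex_bound (a : nat -> R) K C :
  (forall m, Rabs (a m) <= C * ((INR m + 1)^K * (/2)^m)) -> ex_series a.
Proof.
  intros H. apply (ex_series_le a (fun m => C * ((INR m + 1)^K * (/2)^m))).
  - exact H.
  - exact (ex_series_scal_l C _ (geom_poly K)).
Qed.

Lemma rise_shift k y : rise (S k) y = y * rise k (y + 1).
Proof.
  induction k as [|k IH].
  - simpl. ring.
  - change (rise (S (S k)) y) with (rise (S k) y * (y + INR (S k))).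
    rewrite IH. simpl rise. rewrite S_INR. ring.
Qed.

Lemma rise_bound k y : 0 <= y -> 0 <= rise k y <= (y + INR k)^k.
Proof.
  intros Hy. induction k as [|k IH].
  - simpl. lra.
  - simpl rise. rewrite S_INR. pose proof (pos_INR k).
    change ((y + (INR k + 1)) ^ S k) with ((y + (INR k + 1)) * (y + (INR k + 1)) ^ k).
    destruct IH as [I1 I2].
    split. apply Rmult_le_pos; lra.
    rewrite Rmult_comm. apply Rmult_le_compat; try lra.
    apply Rle_trans with ((y + INR k)^k). lra. apply pow_incr. lra.
Qed.

Lemma conv_rise (w s : nat -> R) k : (forall m, 0 <= w m <= (/2)^m) ->
  (forall m, 0 <= s m <= INR m + 1) -> ex_series (fun m => w m * rise k (s m)).
Proof.
  intros Hw Hs. apply (ex_bound _ k ((INR k + 1)^k)). intros m.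
  destruct (Hw m) as [Hw1 Hw2]. destruct (Hs m) as [Hs1 Hs2].
  destruct (rise_bound k (s m) Hs1) as [Hr1 Hr2].
  pose proof (pos_INR k). pose proof (pos_INR m).
  rewrite Rabs_pos_eq by (apply Rmult_le_pos; auto).
  replace ((INR k + 1) ^ k * ((INR m + 1) ^ k * (/ 2) ^ m))
    with ((/2)^m * ((INR k + 1) * (INR m + 1))^k) by (rewrite Rpow_mult_distr; ring).
  apply Rmult_le_compat; auto.
  apply Rle_trans with (1 := Hr2). apply pow_incr. nra.
Qed.

Lemma conv_pow (w s : nat -> R) k : (forall m, 0 <= w m <= (/2)^m) ->
  (forall m, 0 <= s m <= INR m + 1) -> ex_series (fun m => w m * s m ^ k).
Proof.
  intros Hw Hs. apply (ex_bound _ k 1). intros m.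
  destruct (Hw m) as [Hw1 Hw2]. destruct (Hs m) as [Hs1 Hs2].
  rewrite Rabs_pos_eq by (apply Rmult_le_pos; auto; apply pow_le; auto).
  rewrite Rmult_1_l, Rmult_comm. apply Rmult_le_compat; auto. apply pow_le; auto.
  apply pow_incr; auto.
Qed.

Fixpoint cA (m : nat) : R :=
  match m with O => 1 | S m' => cA m' * (2 * INR m' + 1) / (4 * (INR m' + 1)) end.
Definition yA (m : nat) : R := INR m + / 2.

Lemma cA_bound m : 0 <= cA m <= (/2)^m.
Proof.
  induction m as [|m IH].
  - simpl. lra.
  - simpl cA. pose proof (pos_INR m). destruct IH as [I1 I2].
    assert (0 <= (2 * INR m + 1) / (4 * (INR m + 1)) <= /2).
    { split. apply Rdiv_le_0_compat; lra.
      apply Rmult_le_reg_r with (4 * (INR m + 1)). lra.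
      field_simplify; lra. }
    unfold Rdiv. rewrite Rmult_assoc. change ((/2)^(S m)) with (/2 * (/2)^m).
    split. apply Rmult_le_pos; lra. 
    rewrite Rmult_comm. apply Rmult_le_compat; lra.
Qed.

Lemma yA_bound m : 0 <= yA m <= INR m + 1.
Proof. unfold yA. pose proof (pos_INR m). lra. Qed.

Definition ZA : R := Series (fun m => cA m * rise 0 (yA m)).

Lemma momA k : is_series (fun m => cA m * rise k (yA m)) (INR (odd_dfact k) * ZA).
Proof.
  induction k as [|k IH].
  - simpl INR. rewrite Rmult_1_l. apply Series_correct. apply conv_rise.
    apply cA_bound. apply yA_bound.
  - set (M' := Series (fun m => cA m * rise (S k) (yA m))).
    assert (HM : is_series (fun m => cA m * rise (S k) (yA m)) M').
    { apply Series_correct. apply conv_rise. apply cA_bound. apply yA_bound. }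
    set (d := fun m => INR m * (cA m * rise k (yA m))).
    assert (Hd : is_series d (M' - (INR k + /2) * (INR (odd_dfact k) * ZA))).
    { apply isR_ext with (fun m => cA m * rise (S k) (yA m) - (INR k + /2) * (cA m * rise k (yA m))).
      intros m. unfold d. simpl rise. unfold yA. ring.
      apply isR_minus. exact HM. apply isR_scal. exact IH. }
    assert (Hs := isR_shift _ _ Hd).
    assert (H2 := isR_scal 2 _ _ Hs).
    assert (H3 : is_series (fun m => cA m * rise (S k) (yA m))
       (2 * (M' - (INR k + / 2) * (INR (odd_dfact k) * ZA) - d 0%nat))).
    { apply isR_ext with (2 := H2). intros m. unfold d.
      assert (Ey : yA (S m) = yA m + 1) by (unfold yA; rewrite S_INR; ring).
      rewrite Ey, rise_shift. simpl cA. rewrite S_INR. unfold yA.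
      pose proof (pos_INR m). field. lra. }
    assert (E := is_series_unique _ _ H3). fold M' in E.
    assert (Ed : d 0%nat = 0) by (unfold d; simpl; ring).
    rewrite Ed in E.
    replace (INR (odd_dfact (S k)) * ZA) with M'. exact HM.
    change (odd_dfact (S k)) with ((2 * k + 1) * odd_dfact k)%nat.
    rewrite mult_INR, plus_INR, mult_INR. simpl INR. lra.
Qed.

Lemma sum_mul_l c F n : c * sum_f_R0 F n = sum_f_R0 (fun k => c * F k) n.
Proof. rewrite scal_sum. apply sum_eq. intros; ring. Qed.

Lemma muA n : is_series (fun m => cA m * yA m ^ n) (seqA n * ZA).
Proof.
  assert (H : is_series
    (fun m => sum_f_R0 (fun k => ((-1)^n * ((-1)^k * INR (stirling2 n k))) * (cA m * rise k (yA m))) n)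
    (sum_f_R0 (fun k => ((-1)^n * ((-1)^k * INR (stirling2 n k))) * (INR (odd_dfact k) * ZA)) n)).
  { apply isR_sum. intros k _. apply isR_scal. apply momA. }
  replace (seqA n * ZA) with
    (sum_f_R0 (fun k => ((-1)^n * ((-1)^k * INR (stirling2 n k))) * (INR (odd_dfact k) * ZA)) n).
  - apply isR_ext with (2 := H). intros m. rewrite (expand n (yA m)).
    rewrite !sum_mul_l. apply sum_eq. intros i _. ring.
  - rewrite seqA_eq. rewrite Rmult_comm, !sum_mul_l. apply sum_eq. intros i _. ring.
Qed.

Definition wB (m : nat) : R := (/2)^(S m).

Lemma wB_bound m : 0 <= wB m <= (/2)^m.
Proof.
  unfold wB. change ((/2)^(S m)) with (/2 * (/2)^m).
  assert (0 <= (/2)^m) by (apply pow_le; lra). lra.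
Qed.

Lemma sB_bound m : 0 <= INR m <= INR m + 1.
Proof. pose proof (pos_INR m). lra. Qed.

Lemma sB1_bound m : 0 <= INR m + 1 <= INR m + 1.
Proof. pose proof (pos_INR m). lra. Qed.

Definition ZB : R := Series (fun m => wB m * rise 0 (INR m)).

Lemma momB k : is_series (fun m => wB m * rise k (INR m + 1)) (2^k * INR (fact k) * ZB) /\
               is_series (fun m => wB m * rise k (INR m)) (Fb k * ZB).
Proof.
  induction k as [|k [IT IR]].
  - assert (H : is_series (fun m => wB m * rise 0 (INR m)) ZB).
    { apply Series_correct. apply conv_rise. apply wB_bound. apply sB_bound. }
    simpl Fb. simpl pow. simpl fact. simpl INR. rewrite !Rmult_1_l. split; auto.
  - set (RA := Series (fun m => wB m * rise (S k) (INR m))).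
    assert (HR : is_series (fun m => wB m * rise (S k) (INR m)) RA).
    { apply Series_correct. apply conv_rise. apply wB_bound. apply sB_bound. }
    assert (Hs := isR_shift _ _ HR).
    assert (Ea0 : wB 0 * rise (S k) (INR 0) = 0) by (rewrite rise_shift; simpl; ring).
    assert (Hs' : is_series (fun n => wB (S n) * rise (S k) (INR (S n))) (RA - 0)).
    { replace (RA - 0) with (RA - wB 0 * rise (S k) (INR 0)) by (rewrite Ea0; ring). exact Hs. }
    clear Hs. rename Hs' into Hs.
    assert (H1 : is_series (fun m => wB m * rise (S k) (INR m + 1)) (2 * (RA - 0))).
    { apply isR_ext with (2 := isR_scal 2 _ _ Hs). intros m. unfold wB.
      rewrite S_INR. change ((/2)^(S (S m))) with (/2 * (/2)^(S m)). field. }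
    assert (H2 : is_series (fun m => wB m * rise (S k) (INR m + 1))
                    (RA + (INR k + 1) * (2^k * INR (fact k) * ZB))).
    { apply isR_ext with (2 := isR_plus _ _ _ _ HR (isR_scal (INR k + 1) _ _ IT)).
      intros m. rewrite (rise_shift k (INR m)). simpl rise. ring. }
    assert (E := eq_trans (eq_sym (is_series_unique _ _ H1)) (is_series_unique _ _ H2)).
    assert (ERA : RA = (INR k + 1) * (2^k * INR (fact k) * ZB)) by lra.
    replace (2 ^ S k * INR (fact (S k)) * ZB) with (2 * (RA - 0)).
    2:{ rewrite ERA. rewrite (fact_simpl k), mult_INR, S_INR. simpl pow. ring. }
    split; auto.
    replace (Fb (S k) * ZB) with RA; auto.
    rewrite ERA. change (Fb (S k)) with (2^k * INR (fact (S k))). rewrite (fact_simpl k), mult_INR, S_INR. ring.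
Qed.

Lemma muB j : is_series (fun m => wB m * INR m ^ j) (seqB (S j) * ZB).
Proof.
  assert (H : is_series
    (fun m => sum_f_R0 (fun k => ((-1)^j * ((-1)^k * INR (stirling2 j k))) * (wB m * rise k (INR m))) j)
    (sum_f_R0 (fun k => ((-1)^j * ((-1)^k * INR (stirling2 j k))) * (Fb k * ZB)) j)).
  { apply isR_sum. intros k _. apply isR_scal. apply momB. }
  replace (seqB (S j) * ZB) with
    (sum_f_R0 (fun k => ((-1)^j * ((-1)^k * INR (stirling2 j k))) * (Fb k * ZB)) j).
  - apply isR_ext with (2 := H). intros m. rewrite (expand j (INR m)).
    rewrite !sum_mul_l. apply sum_eq. intros i _. ring.
  - rewrite seqB_eq. rewrite Rmult_comm, !sum_mul_l. apply sum_eq. intros i _. ring.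
Qed.

Lemma ZA_pos : 0 < ZA.
Proof.
  assert (H := momA 0). simpl odd_dfact in H. simpl INR in H. rewrite Rmult_1_l in H.
  apply (isR_pos0 _ _ H).
  - intros m. simpl rise. rewrite Rmult_1_r. apply cA_bound.
  - simpl. lra.
Qed.

Lemma ZB_pos : 0 < ZB.
Proof.
  assert (H := proj2 (momB 0)). simpl Fb in H. rewrite Rmult_1_l in H.
  apply (isR_pos0 _ _ H).
  - intros m. simpl rise. rewrite Rmult_1_r. apply wB_bound.
  - unfold wB. simpl. lra.
Qed.

Lemma seqA0 : seqA 0 = 1.
Proof. rewrite seqA_eq. simpl. ring. Qed.
Lemma seqA1 : seqA 1 = 1.
Proof. rewrite seqA_eq. simpl. ring. Qed.
Lemma seqB1 : seqB 1 = 1.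
Proof. rewrite seqB_eq. simpl. ring. Qed.
Lemma seqB2 : seqB 2 = 1.
Proof. rewrite seqB_eq. simpl. ring. Qed.

Lemma div_pos a Z : 0 < Z -> 0 < a * Z -> 0 < a.
Proof. intros HZ H. apply Rmult_lt_reg_r with Z; lra. Qed.

Lemma div_le a b Z : 0 < Z -> a * Z <= b * Z -> a <= b.
Proof. intros HZ H. apply Rmult_le_reg_r with Z; lra. Qed.

Lemma div_lc a b c Z : 0 < Z -> (b * Z)^2 <= (a * Z) * (c * Z) -> b^2 <= a * c.
Proof.
  intros HZ H. apply Rmult_le_reg_r with (Z^2). apply pow_lt; lra.
  replace (b^2 * Z^2) with ((b*Z)^2) by ring.
  replace (a * c * Z^2) with ((a * Z) * (c * Z)) by ring. exact H.
Qed.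

Lemma A_pos n : 0 < seqA n.
Proof.
  apply (div_pos _ ZA ZA_pos). apply (isR_pos0 _ _ (muA n)).
  - intros m. apply Rmult_le_pos. apply cA_bound. apply pow_le. apply yA_bound.
  - simpl cA. unfold yA. simpl INR. rewrite Rmult_1_l. apply pow_lt. lra.
Qed.

Lemma A_mono n : seqA n <= seqA (S n).
Proof.
  apply (div_le _ _ ZA ZA_pos).
  replace (seqA n * ZA) with (seqA n * ZA + (/2)^n * (seqA 1 * ZA - seqA 0 * ZA))
    by (rewrite seqA0, seqA1; ring).
  apply (isR_le (fun m => cA m * yA m ^ n + (/2)^n * (cA m * yA m ^ 1 - cA m * yA m ^ 0))
                (fun m => cA m * yA m ^ (S n))).
  - apply isR_plus. apply muA. apply isR_scal. apply isR_minus; apply muA.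
  - apply muA.
  - intros m.
    assert (P : 0 <= cA m * ((yA m - 1) * (yA m ^ n - (/2)^n))).
    { apply Rmult_le_pos. apply cA_bound.
      destruct m as [|m].
      - unfold yA. simpl INR. rewrite Rplus_0_l. lra.
      - unfold yA. rewrite S_INR. pose proof (pos_INR m).
        apply Rmult_le_pos. lra. assert ((/2)^n <= (INR m + 1 + /2)^n).
        apply pow_incr. lra. lra. }
    assert (E : cA m * yA m ^ S n - (cA m * yA m ^ n + (/ 2) ^ n * (cA m * yA m ^ 1 - cA m * yA m ^ 0))
                = cA m * ((yA m - 1) * (yA m ^ n - (/2)^n))) by (simpl; ring).
    lra.
Qed.

Lemma A_lc n : (1 <= n)%nat -> seqA n ^ 2 <= seqA (n - 1) * seqA (S n).
Proof.
  intros Hn. destruct n as [|p]; [lia|]. replace (S p - 1)%nat with p by lia.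
  apply (div_lc _ _ _ ZA ZA_pos).
  apply (series_CS (fun m => cA m * yA m ^ p) (fun m => cA m * yA m ^ S p)
                   (fun m => cA m * yA m ^ S (S p))); try apply muA;
    try (intros m; apply Rmult_le_pos; [apply cA_bound | apply pow_le; apply yA_bound]).
  intros m. simpl. ring.
Qed.

Lemma B_pos n : (1 <= n)%nat -> 0 < seqB n.
Proof.
  intros Hn. destruct n as [|j]; [lia|].
  apply (div_pos _ ZB ZB_pos).
  assert (H := isR_shift _ _ (muB j)).
  assert (Hnn : forall m, 0 <= wB m * INR m ^ j).
  { intros m. apply Rmult_le_pos. apply wB_bound. apply pow_le, pos_INR. }
  assert (0 < seqB (S j) * ZB - wB 0 * INR 0 ^ j).
  { apply (isR_pos0 _ _ H). intros; apply Hnn.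
    unfold wB. simpl INR. rewrite pow1. simpl. lra. }
  specialize (Hnn 0%nat). lra.
Qed.

Lemma B_mono n : (1 <= n)%nat -> seqB n <= seqB (S n).
Proof.
  intros Hn. destruct n as [|[|j]]; [lia| rewrite seqB1, seqB2; lra |].
  apply (div_le _ _ ZB ZB_pos).
  apply (isR_le _ _ _ _ (muB (S j)) (muB (S (S j)))).
  intros m. apply Rmult_le_compat_l. apply wB_bound.
  destruct m as [|m].
  - simpl. lra.
  - rewrite S_INR. pose proof (pos_INR m).
    change ((INR m + 1) ^ S (S j)) with ((INR m + 1) * (INR m + 1) ^ S j).
    assert (0 <= (INR m + 1) ^ S j) by (apply pow_le; lra). nra.
Qed.

Lemma B_lc n : (2 <= n)%nat -> seqB n ^ 2 <= seqB (n - 1) * seqB (S n).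
Proof.
  intros Hn. destruct n as [|[|j]]; [lia|lia|]. replace (S (S j) - 1)%nat with (S j) by lia.
  apply (div_lc _ _ _ ZB ZB_pos).
  apply (series_CS (fun m => wB m * INR m ^ j) (fun m => wB m * INR m ^ S j)
                   (fun m => wB m * INR m ^ S (S j))); try apply muB;
    try (intros m; apply Rmult_le_pos; [apply wB_bound | apply pow_le; apply pos_INR]).
  intros m. simpl. ring.
Qed.

Definition Lf (x : R) : R := - ln (2 - exp x).
Definition term (t : R * R * R) (x : R) : R :=
  let '(c, a, b) := t in c * exp (a * x + b * Lf x).
Fixpoint eval (l : list (R * R * R)) (x : R) : R :=
  match l with nil => 0 | t :: l' => term t x + eval l' x end.
Definition dl (l : list (R * R * R)) : list (R * R * R) :=
  flat_map (fun t => let '(c, a, b) := t in [(c * a, a, b); (c * b, a + 1, b + 1)]) l.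

Lemma exp_lt2 x : x < ln 2 -> exp x < 2.
Proof. intros H. rewrite <- (exp_ln 2) by lra. apply exp_increasing; auto. Qed.

Lemma term_derive c a b x : x < ln 2 ->
  is_derive (term (c, a, b)) x
    (c * a * exp (a * x + b * Lf x) + c * b * exp ((a + 1) * x + (b + 1) * Lf x)).
Proof.
  intros Hx. pose proof (exp_lt2 x Hx) as He. pose proof (exp_pos x) as Hp.
  unfold term, Lf. auto_derive.
  - lra.
  - replace ((a + 1) * x + (b + 1) * - ln (2 - exp x))
      with ((a * x + b * - ln (2 - exp x)) + (x + - ln (2 - exp x))) by ring.
    unfold Rminus in *. rewrite !exp_plus, exp_Ropp, exp_ln by lra.
    field. lra.
Qed.

Lemma eval_derive l x : x < ln 2 -> is_derive (eval l) x (eval (dl l) x).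
Proof.
  intros Hx. induction l as [|[[c a] b] l IH].
  - simpl. apply (is_derive_const 0).
  - simpl. 
    apply is_derive_ext with (fun y => term (c, a, b) y + eval l y). { intros; reflexivity. }
    replace (c * a * exp (a * x + b * Lf x) +
       (c * b * exp ((a + 1) * x + (b + 1) * Lf x) + eval (dl l) x))
      with ((c * a * exp (a * x + b * Lf x) + c * b * exp ((a + 1) * x + (b + 1) * Lf x)) + eval (dl l) x) by ring.
    exact (is_derive_plus (term (c,a,b)) (eval l) x _ _ (term_derive c a b x Hx) IH).
Qed.

Definition good (l : list (R * R * R)) : Prop :=
  List.Forall (fun t => 0 <= fst (fst t) /\ 0 <= snd (fst t) /\ 0 <= snd t) l.

Lemma good_dl l : good l -> good (dl l).
Proof.
  induction 1 as [|[[c a] b] l Ht Hl IH]; simpl in *.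
  - constructor.
  - destruct Ht as [H1 [H2 H3]]. constructor; [simpl; repeat split; nra|].
    constructor; [simpl; repeat split; nra|]. exact IH.
Qed.

Lemma good_iter n l : good l -> good (Nat.iter n dl l).
Proof. induction n; simpl; auto using good_dl. Qed.

Lemma eval_nonneg l x : good l -> 0 <= eval l x.
Proof.
  induction 1 as [|[[c a] b] l Ht Hl IH]; simpl in *.
  - lra.
  - destruct Ht as [H1 _]. pose proof (exp_pos (a * x + b * Lf x)). nra.
Qed.

Lemma Derive_n_eval (h : R -> R) l : (forall y, y < ln 2 -> h y = eval l y) ->
  forall n x, x < ln 2 -> ex_derive_n h n x /\ Derive_n h n x = eval (Nat.iter n dl l) x.
Proof.
  intros Hh n. induction n as [|n IH]; intros x Hx.
  - split. exact I. simpl. apply Hh, Hx.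
  - assert (Hloc : locally x (fun y => y < ln 2)) by (apply open_lt; exact Hx).
    assert (Hl : locally x (fun y => eval (Nat.iter n dl l) y = Derive_n h n y)).
    { eapply filter_imp; [|exact Hloc]. intros y Hy. symmetry. apply IH, Hy. }
    split.
    + simpl. apply (ex_derive_ext_loc _ _ x Hl).
      eexists. apply eval_derive, Hx.
    + simpl Derive_n. rewrite <- (Derive_ext_loc _ _ x Hl).
      apply is_derive_unique. apply eval_derive, Hx.
Qed.

Lemma Derive_n_S (f : R -> R) n x : Derive_n f (S n) x = Derive_n (Derive f) n x.
Proof.
  revert x. induction n as [|n IH]; intros x.
  - simpl. apply Derive_ext. intros; reflexivity.
  - simpl. apply Derive_ext. intros t. apply IH.
Qed.

Lemma sqrt_exp z : 0 < z -> sqrt z = exp (ln z / 2).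
Proof.
  intros Hz. assert (E : z = exp (ln z / 2) * exp (ln z / 2)).
  { rewrite <- exp_plus. replace (ln z / 2 + ln z / 2) with (ln z) by field.
    rewrite exp_ln; auto. }
  rewrite E at 1. apply sqrt_square. left; apply exp_pos.
Qed.

Lemma G_eval y : y < ln 2 -> G y = eval [(1/4, 1/2, 1/2)] y.
Proof.
  intros Hy. pose proof (exp_lt2 y Hy) as He. pose proof (exp_pos y) as Hp.
  unfold G. simpl. unfold Lf.
  replace (2 * exp (- y) - 1) with ((2 - exp y) / exp y) by (rewrite exp_Ropp; field; lra).
  rewrite sqrt_exp by (apply Rdiv_lt_0_compat; lra).
  rewrite ln_div by lra. rewrite ln_exp.
  replace (1 / 2 * y + 1 / 2 * - ln (2 - exp y)) with (- ((ln (2 - exp y) - y) / 2)) by field.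
  rewrite exp_Ropp. pose proof (exp_pos ((ln (2 - exp y) - y) / 2)). field. lra.
Qed.

Lemma lnG_derive y : y < ln 2 -> Derive (fun z => ln (G z)) y = eval [(1, 0, 1)] y.
Proof.
  intros Hy.
  assert (Hloc : locally y (fun z => z < ln 2)) by (apply open_lt; exact Hy).
  assert (Hl : locally y (fun z => ln (1/4) + (1/2 * z + 1/2 * Lf z) = ln (G z))).
  { eapply filter_imp; [|exact Hloc]. intros z Hz. rewrite G_eval by exact Hz.
    simpl. rewrite Rplus_0_r, ln_mult, ln_exp. reflexivity. lra. apply exp_pos. }
  transitivity (Derive (fun z => ln (1/4) + (1/2 * z + 1/2 * Lf z)) y).
  { symmetry. apply Derive_ext_loc. exact Hl. }
  apply is_derive_unique.
  pose proof (exp_lt2 y Hy) as He. pose proof (exp_pos y) as Hp.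
  simpl. unfold Lf. auto_derive.
  - lra.
  - replace (0 * y + 1 * - ln (2 - exp y)) with (- ln (2 - exp y)) by ring.
    rewrite exp_Ropp, exp_ln by lra. unfold Rminus.
    field. lra.
Qed.

Theorem part1 : log_abs_monotonic G (fun x => x < ln 2).
Proof.
  split; [|split].
  - intros x Hx. rewrite G_eval by exact Hx. simpl. pose proof (exp_pos (1 / 2 * x + 1 / 2 * Lf x)). lra.
  - intros n x Hx. apply (Derive_n_eval G [(1/4, 1/2, 1/2)] G_eval n x Hx).
  - intros n x Hx Hn. destruct n as [|n]; [lia|].
    rewrite Derive_n_S.
    destruct (Derive_n_eval (Derive (fun y => ln (G y))) [(1, 0, 1)] lnG_derive n x Hx) as [_ E].
    rewrite E. apply eval_nonneg. apply good_iter.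
    constructor; [simpl; lra | constructor].
Qed.

Theorem theorem6p2 :
  log_abs_monotonic G (fun x => x < ln 2) /\
  ((forall n : nat, 0 < seqA n) /\
   (forall n : nat, seqA n <= seqA (S n)) /\
   (forall n : nat, (1 <= n)%nat -> seqA n ^ 2 <= seqA (n - 1) * seqA (S n))) /\
  ((forall n : nat, (1 <= n)%nat -> 0 < seqB n) /\
   (forall n : nat, (1 <= n)%nat -> seqB n <= seqB (S n)) /\
   (forall n : nat, (2 <= n)%nat -> seqB n ^ 2 <= seqB (n - 1) * seqB (S n))).
Proof.
  split; [exact part1|].
  split; split; [| split | | split].
  - exact A_pos.
  - exact A_mono.
  - exact A_lc.
  - exact B_pos.
  - exact B_mono.
  - exact B_lc.
Qed.
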